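(* Let $L_1,L_2\in\mathcal{L}_{\mathrm{irr}}$ be irreducible subspaces of an arrangement $\mathcal{H}\subset\mathbb{CP}^n$ such that $L=L_1\cap L_2$ is non-empty and reducible. Then the irreducible components of $L$ are exactly $L_1$ and $L_2$; in particular $L_1+L_2=\mathbb{CP}^n$.
   Context: $\mathcal{H}$ is a finite set of distinct hyperplanes in $\mathbb{CP}^n$; $\mathcal{L}$ the set of non-empty proper intersections of members; $\mathcal{H}_L=\{H\in\mathcal{H}:L\subset H\}$. A splitting of an arrangement $\mathcal{K}$ is a decomposition $\mathcal{K}=\mathcal{K}_1\cup\mathcal{K}_2$ whose centres (intersections of members; $\mathbb{CP}^n$ for the empty collection) $T_1,T_2$ satisfy $T_1+T_2=\mathbb{CP}^n$ (projective span); non-trivial if both parts are non-empty; $\mathcal{K}$ is irreducible if no non-trivial splitting exists. $L\in\mathcal{L}$ is irreducible if $\mathcal{H}_L$ is irreducible, reducible otherwise; $\mathcal{L}_{\mathrm{irr}}$ is the set of irreducible elements. The irreducible components of $L\in\mathcal{L}$ are the inclusion-minimal elements of $\mathcal{L}_{\mathrm{irr}}$ containing $L$. *)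

(* Defs.v *)
From HB Require Import structures.
From mathcomp Require Import all_boot all_order all_algebra.
From mathcomp Require Import complex.
From mathcomp Require Import reals.
Set Implicit Arguments. Unset Strict Implicit. Unset Printing Implicit Defensive.
Import Order.TTheory GRing.Theory Num.Theory.
Local Open Scope ring_scope.

(* Projective space CP^n is modelled by the vector space C^(n+1)
   ('rV[C]_(n.+1) with C = R[i] for a realType R, i.e. C = complex numbers);
   a projective subspace is a linear subspace {vspace C^(n+1)}; the empty
   projective subspace is 0%VS, CP^n itself is fullv; intersection is :&:,
   projective span is + ; inclusion is <=. A hyperplane of CP^n is a linear
   subspace of dimension n. *)

Section Arrangements.
Variables (R : realType) (n m : nat).
Local Notation V := 'rV[R[i]]_(n.+1).
Variable Hf : 'I_m -> {vspace V}.

(* centre of a collection of members (fullv for the empty collection) *)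
Definition centre (K : {set 'I_m}) : {vspace V} := (\bigcap_(i in K) Hf i)%VS.

Definition splitting (K K1 K2 : {set 'I_m}) : Prop :=
  K = K1 :|: K2 /\ (centre K1 + centre K2)%VS = fullv.

Definition nontrivial_splitting (K K1 K2 : {set 'I_m}) : Prop :=
  splitting K K1 K2 /\ K1 != set0 /\ K2 != set0.

Definition irreducible_arr (K : {set 'I_m}) : Prop :=
  ~ exists K1 K2, nontrivial_splitting K K1 K2.

Definition in_calL (L : {vspace V}) : Prop :=
  exists K : {set 'I_m}, K != set0 /\ L = centre K /\ L != 0%VS /\ L != fullv.

Definition HL (L : {vspace V}) : {set 'I_m} := [set i | (L <= Hf i)%VS].

Definition irreducible_elt (L : {vspace V}) : Prop :=
  in_calL L /\ irreducible_arr (HL L).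

Definition reducible_elt (L : {vspace V}) : Prop :=
  in_calL L /\ ~ irreducible_arr (HL L).

Definition irr_component (L X : {vspace V}) : Prop :=
  irreducible_elt X /\ (L <= X)%VS /\
  forall Y : {vspace V}, irreducible_elt Y -> (L <= Y)%VS -> (Y <= X)%VS -> Y = X.

End Arrangements.

(* Main.v *)
Require Import Defs.
From HB Require Import structures.
From mathcomp Require Import all_boot all_order all_algebra.
From mathcomp Require Import complex.
From mathcomp Require Import reals.
Import Order.TTheory GRing.Theory Num.Theory.
Local Open Scope ring_scope.

Lemma centreP (R : realType) (n m : nat) (Hf : 'I_m -> {vspace 'rV[R[i]]_(n.+1)})
  (K : {set 'I_m}) (X : {vspace 'rV[R[i]]_(n.+1)}) :
  reflect (forall i, i \in K -> (X <= Hf i)%VS) (X <= centre Hf K)%VS.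
Proof. exact: subv_bigcapP. Qed.

Lemma centre_mono (R : realType) (n m : nat) (Hf : 'I_m -> {vspace 'rV[R[i]]_(n.+1)})
  (K K' : {set 'I_m}) : K \subset K' -> (centre Hf K' <= centre Hf K)%VS.
Proof.
move=> /subsetP sKK'; apply/centreP => i iK.
by apply/(bigcapv_inf i); [apply: sKK'|].
Qed.

Lemma centreU (R : realType) (n m : nat) (Hf : 'I_m -> {vspace 'rV[R[i]]_(n.+1)})
  (A B : {set 'I_m}) : centre Hf (A :|: B) = (centre Hf A :&: centre Hf B)%VS.
Proof.
apply/eqP; rewrite eqEsubv subv_cap !centre_mono ?subsetUl ?subsetUr //=.
apply/centreP => i; rewrite inE => /orP[] iA.
  by apply: subv_trans (capvSl _ _) _; apply/(bigcapv_inf i).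
by apply: subv_trans (capvSr _ _) _; apply/(bigcapv_inf i).
Qed.

Lemma centreHL (R : realType) (n m : nat) (Hf : 'I_m -> {vspace 'rV[R[i]]_(n.+1)})
  (X : {vspace 'rV[R[i]]_(n.+1)}) : in_calL Hf X -> centre Hf (HL Hf X) = X.
Proof.
move=> [K0 [_ [XK _]]].
apply/eqP; rewrite eqEsubv; apply/andP; split.
  rewrite {2}XK; apply/centreP => i iK0; apply/(bigcapv_inf i) => //.
  by rewrite inE XK; apply/(bigcapv_inf i).
by apply/centreP => i; rewrite inE.
Qed.

Lemma centre_full (R : realType) (n m : nat) (Hf : 'I_m -> {vspace 'rV[R[i]]_(n.+1)})
  (Hdim : forall j, \dim (Hf j) = n) (K : {set 'I_m}) :
  centre Hf K = fullv -> K = set0.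
Proof.
move=> cK; apply/eqP; apply/set0Pn => -[i iK].
have : (fullv <= Hf i)%VS by rewrite -cK; apply/(bigcapv_inf i).
move=> /dimvS; rewrite Hdim dimvf /dim /= mul1n.
by rewrite ltnn.
Qed.

Lemma HL_sub (R : realType) (n m : nat) (Hf : 'I_m -> {vspace 'rV[R[i]]_(n.+1)})
  (X Y : {vspace 'rV[R[i]]_(n.+1)}) : (X <= Y)%VS -> HL Hf Y \subset HL Hf X.
Proof.
move=> XY; apply/subsetP => i; rewrite !inE => Yi; exact: subv_trans XY Yi.
Qed.

Lemma restrict_split (R : realType) (n m : nat) (Hf : 'I_m -> {vspace 'rV[R[i]]_(n.+1)})
  (K1 K2 : {set 'I_m}) (X : {vspace 'rV[R[i]]_(n.+1)}) :
  (centre Hf K1 + centre Hf K2)%VS = fullv ->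
  irreducible_arr Hf (HL Hf X) -> HL Hf X \subset K1 :|: K2 ->
  HL Hf X \subset K1 \/ HL Hf X \subset K2.
Proof.
move=> sp irr sub.
case: (boolP (HL Hf X \subset K1)) => h1; first by left.
case: (boolP (HL Hf X \subset K2)) => h2; first by right.
exfalso; apply: irr; exists (HL Hf X :&: K1), (HL Hf X :&: K2).
split; [split|].
- by rewrite -setIUr; apply/esym/setIidPl.
- apply/eqP; rewrite eqEsubv subvf /= -sp.
  by apply: addvS; apply: centre_mono; rewrite subsetIr.
- split.
  + move/subsetPn: h2 => [i iX iK2]; apply/set0Pn; exists i.
    rewrite inE iX /=; move/subsetP: sub => /(_ i iX); rewrite inE.
    by rewrite (negbTE iK2) orbF.
  + move/subsetPn: h1 => [i iX iK1]; apply/set0Pn; exists i.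
    rewrite inE iX /=; move/subsetP: sub => /(_ i iX); rewrite inE.
    by rewrite (negbTE iK1).
Qed.

Arguments centreHL {R n m Hf X}.
Arguments centre_full {R n m Hf}.
Arguments restrict_split {R n m Hf K1 K2 X}.
Arguments centre_mono {R n m Hf K K'}.
Arguments HL_sub {R n m Hf X Y}.
From Stdlib Require Import Classical.
From mathcomp Require Import zify.

Lemma dim_match (R : realType) (n : nat) (Ta Tb L1 L2 : {vspace 'rV[R[i]]_(n.+1)}) :
  (Ta <= L1)%VS -> (Tb <= L2)%VS -> (Ta + Tb)%VS = fullv ->
  (Ta :&: Tb)%VS = (L1 :&: L2)%VS ->
  [/\ Ta = L1, Tb = L2 & (L1 + L2)%VS = fullv].
Proof.
move=> s1 s2 sp cp.
have f : (L1 + L2)%VS = fullv.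
  by apply/eqP; rewrite eqEsubv subvf /= -sp addvS.
have e1 := dimv_sum_cap Ta Tb; have e2 := dimv_sum_cap L1 L2.
rewrite sp cp in e1; rewrite f in e2.
have d1 := dimvS s1; have d2 := dimvS s2.
have h1 : (\dim L1 <= \dim Ta)%N by lia.
have h2 : (\dim L2 <= \dim Tb)%N by lia.
split => //; apply/eqP; by rewrite eqEdim ?s1 ?s2.
Qed.

Lemma same_side (R : realType) (n m : nat) (Hf : 'I_m -> {vspace 'rV[R[i]]_(n.+1)})
  (Hdim : forall j, \dim (Hf j) = n) (Ka Kb : {set 'I_m})
  (L1 L2 : {vspace 'rV[R[i]]_(n.+1)}) :
  in_calL Hf L1 -> in_calL Hf L2 ->
  HL Hf L1 \subset Ka -> HL Hf L2 \subset Ka ->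
  (centre Hf Ka + centre Hf Kb)%VS = fullv ->
  (centre Hf Ka :&: centre Hf Kb)%VS = (L1 :&: L2)%VS -> Kb != set0 -> False.
Proof.
move=> c1 c2 s1 s2 sp cp nz.
have t1 : (centre Hf Ka <= L1)%VS by rewrite -{1}(centreHL c1) centre_mono.
have t2 : (centre Hf Ka <= L2)%VS by rewrite -{1}(centreHL c2) centre_mono.
have t : (centre Hf Ka <= centre Hf Kb)%VS.
  apply: subv_trans (capvSr (centre Hf Ka) _); rewrite cp subv_cap t1 t2 //.
move/addv_idPr: t; rewrite sp => /esym /(centre_full Hdim) Kb0.
by rewrite Kb0 eqxx in nz.
Qed.

Arguments same_side {R n m Hf} Hdim {Ka Kb L1 L2}.
Arguments dim_match {R n Ta Tb L1 L2}.

Lemma core (R : realType) (n m : nat) (Hf : 'I_m -> {vspace 'rV[R[i]]_(n.+1)})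
  (Hdim : forall j, \dim (Hf j) = n) (K1 K2 : {set 'I_m})
  (L1 L2 : {vspace 'rV[R[i]]_(n.+1)}) :
  irreducible_elt Hf L1 -> irreducible_elt Hf L2 -> in_calL Hf (L1 :&: L2)%VS ->
  HL Hf (L1 :&: L2)%VS = K1 :|: K2 ->
  (centre Hf K1 + centre Hf K2)%VS = fullv -> K1 != set0 -> K2 != set0 ->
  (forall X, irreducible_elt Hf X -> (L1 :&: L2 <= X)%VS -> (L1 <= X)%VS \/ (L2 <= X)%VS)
  /\ (L1 + L2)%VS = fullv.
Proof.
move=> [c1 i1] [c2 i2] cL HK sp n1 n2.
have cp : (centre Hf K1 :&: centre Hf K2)%VS = (L1 :&: L2)%VS.
  by rewrite -centreU -HK (centreHL cL).
have sub X : (L1 :&: L2 <= X)%VS -> HL Hf X \subset K1 :|: K2.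
  by move=> h; rewrite -HK; apply: HL_sub.
have [h1|h1] := restrict_split sp i1 (sub _ (capvSl _ _));
have [h2|h2] := restrict_split sp i2 (sub _ (capvSr _ _)).
- by exfalso; apply: (same_side Hdim c1 c2 h1 h2 sp cp n2).
- have t1 : (centre Hf K1 <= L1)%VS by rewrite -{1}(centreHL c1) centre_mono.
  have t2 : (centre Hf K2 <= L2)%VS by rewrite -{1}(centreHL c2) centre_mono.
  have [e1 e2 f] := dim_match t1 t2 sp cp.
  split => // X [cX iX] LX.
  have [hX|hX] := restrict_split sp iX (sub _ LX).
    by left; rewrite -e1 -(centreHL cX) centre_mono.
  by right; rewrite -e2 -(centreHL cX) centre_mono.
- have t1 : (centre Hf K2 <= L1)%VS by rewrite -{1}(centreHL c1) centre_mono.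
  have t2 : (centre Hf K1 <= L2)%VS by rewrite -{1}(centreHL c2) centre_mono.
  rewrite addvC in sp; rewrite capvC in cp.
  have [e1 e2 f] := dim_match t1 t2 sp cp.
  split => // X [cX iX] LX.
  have sX : HL Hf X \subset K2 :|: K1 by rewrite setUC; apply: sub.
  have [hX|hX] := restrict_split sp iX sX.
    by left; rewrite -e1 -(centreHL cX) centre_mono.
  by right; rewrite -e2 -(centreHL cX) centre_mono.
- exfalso; rewrite addvC in sp; rewrite capvC in cp.
  by apply: (same_side Hdim c1 c2 h1 h2 sp cp n1).
Qed.

Arguments core {R n m Hf} Hdim {K1 K2 L1 L2}.

Theorem lemma2p14 (R : realType) (n m : nat)
    (Hf : 'I_m -> {vspace 'rV[R[i]]_(n.+1)})
    (Hinj : injective Hf)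
    (Hdim : forall j, \dim (Hf j) = n)
    (L1 L2 : {vspace 'rV[R[i]]_(n.+1)}) :
  irreducible_elt Hf L1 -> irreducible_elt Hf L2 ->
  (L1 :&: L2)%VS != 0%VS ->
  reducible_elt Hf (L1 :&: L2)%VS ->
  (forall X, irr_component Hf (L1 :&: L2)%VS X <-> (X = L1 \/ X = L2)) /\
  (L1 + L2)%VS = fullv.
Proof.
move=> I1 I2 _ [cL red].
have [K1 [K2 [[HK sp] [n1 n2]]]] : exists K1 K2, nontrivial_splitting Hf (HL Hf (L1 :&: L2)%VS) K1 K2.
  by apply: NNPP.
have [key f] := core Hdim I1 I2 cL HK sp n1 n2.
split => // X; split.
  move=> [iX [LX minX]].
  have [h|h] := key X iX LX.
    by left; symmetry; apply: minX => //; apply: capvSl.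
  by right; symmetry; apply: minX => //; apply: capvSr.
have irrsub (A B : {vspace 'rV[R[i]]_(n.+1)}) : irreducible_elt Hf A -> (B <= A)%VS ->
    (A :&: B)%VS = B.
  by move=> _ /capv_idPr.
move=> [->|->]; split => //; [split; first exact: capvSl | split; first exact: capvSr].
- move=> Y iY LY YL1; have [h|h] := key Y iY LY; first by apply/eqP; rewrite eqEsubv YL1.
  exfalso; have e : (L1 :&: L2)%VS = L2 by apply/capv_idPr; apply: subv_trans YL1.
  by move: red; rewrite e; case: I2.
- move=> Y iY LY YL2; have [h|h] := key Y iY LY; last by apply/eqP; rewrite eqEsubv YL2.
  exfalso; have e : (L1 :&: L2)%VS = L1 by apply/capv_idPl; apply: subv_trans YL2.
  by move: red; rewrite e; case: I1.
Qed.
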